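(* Let $\mathbb{F}$ be an infinite field. Let $I,J,K,I',J',K'$ be finite sets, $\Phi\subseteq I\times J\times K$, and let $f:I\to I'$, $g:J\to J'$, $h:K\to K'$ be functions. Then $R_s(\Phi)\ge R_s((f\times g\times h)(\Phi))$.
   Context: A tensor over $\mathbb{F}$ is a trilinear form $T=\sum_{i\in I,j\in J,k\in K} t_{i,j,k}x_iy_jz_k$ in formal variables indexed by finite sets $I,J,K$; its support is $\operatorname{supp}(T)=\{(i,j,k): t_{i,j,k}\neq 0\}$. The rank $R(T)$ is the smallest $L$ such that $T$ is a sum of $L$ products $(\sum_i a_ix_i)(\sum_j b_jy_j)(\sum_k c_kz_k)$ of linear forms. For $\Phi\subseteq I\times J\times K$, the support rank is $R_s(\Phi)=\min\{R(T):\operatorname{supp}(T)=\Phi\}$ (over tensors with coefficients in $\mathbb{F}$). *)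

(* Defs.v *)
From HB Require Import structures.
From mathcomp Require Import all_boot all_order all_algebra.
From Stdlib Require Import ClassicalEpsilon.
Set Implicit Arguments. Unset Strict Implicit. Unset Printing Implicit Defensive.
Import Order.TTheory GRing.Theory Num.Theory.
Local Open Scope ring_scope.

Definition infinite_field (F : fieldType) : Prop :=
  forall s : seq F, exists x : F, x \notin s.

Definition tensor (F : fieldType) (I J K : finType) := I -> J -> K -> F.

Definition supp (F : fieldType) (I J K : finType) (T : tensor F I J K)
  : {set I * J * K} :=
  [set x : I * J * K | T x.1.1 x.1.2 x.2 != 0].

Definition rank_le (F : fieldType) (I J K : finType) (T : tensor F I J K)
  (L : nat) : Prop :=
  exists (a : 'I_L -> I -> F) (b : 'I_L -> J -> F) (c : 'I_L -> K -> F),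
    forall i j k, T i j k = \sum_(l < L) a l i * b l j * c l k.

Definition pbool (P : Prop) : bool :=
  if excluded_middle_informative P then true else false.

Lemma pboolP (P : Prop) : reflect P (pbool P).
Proof. by rewrite /pbool; case: excluded_middle_informative => h; constructor. Qed.

Lemma rank_le_exists (F : fieldType) (I J K : finType) (T : tensor F I J K) :
  exists L, pbool (rank_le T L).
Proof.
exists #|{: I * J * K}|; apply/pboolP.
pose e := fun l : 'I_#|{: I * J * K}| => enum_val l.
exists (fun l i => ((i == (e l).1.1)%:R * T (e l).1.1 (e l).1.2 (e l).2)).
exists (fun l j => (j == (e l).1.2)%:R).
exists (fun l k => (k == (e l).2)%:R).
move=> i j k.
rewrite -(big_enum_val (A := {: I * J * K})
  (fun x : I * J * K => (i == x.1.1)%:R * T x.1.1 x.1.2 x.2 * (j == x.1.2)%:R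
                        * (k == x.2)%:R)) /=.
rewrite (bigD1 (i, j, k)) //= !eqxx !mulr1 mul1r big1 ?addr0 //.
case=> [[i' j'] k'] /= /negPf.
rewrite !xpair_eqE; rewrite ![_ == i]eq_sym ![_ == j]eq_sym ![_ == k]eq_sym.
case: (i == i') => /=; last by rewrite !mul0r.
case: (j == j') => /=; last by rewrite !mulr0 mul0r.
by move=> ->; rewrite mulr0.
Qed.

Definition rank (F : fieldType) (I J K : finType) (T : tensor F I J K) : nat :=
  ex_minn (rank_le_exists T).

Lemma srank_exists (F : fieldType) (I J K : finType) (Phi : {set I * J * K}) :
  exists L, pbool (exists T : tensor F I J K, supp T = Phi /\ rank T = L).
Proof.
exists (rank (fun i j k => ((i, j, k) \in Phi)%:R : F)); apply/pboolP.
eexists; split; last reflexivity.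
apply/setP => x; rewrite inE /=; case: x => [[i j] k] /=.
by case: ((i, j, k) \in Phi); rewrite ?oner_neq0 ?eqxx.
Qed.

Definition srank (F : fieldType) (I J K : finType) (Phi : {set I * J * K}) : nat :=
  ex_minn (srank_exists F Phi).

Definition timage (I J K I' J' K' : finType) (f : I -> I') (g : J -> J')
  (h : K -> K') (Phi : {set I * J * K}) : {set I' * J' * K'} :=
  [set (f x.1.1, g x.1.2, h x.2) | x in Phi].

(* Main.v *)
Require Import Defs.
From mathcomp Require Import all_boot all_order all_algebra.
From mathcomp Require Import ring.
From Stdlib Require Import Classical.
Set Implicit Arguments. Unset Strict Implicit. Unset Printing Implicit Defensive.
Import Order.TTheory GRing.Theory Num.Theory.
Local Open Scope ring_scope.

Lemma uniq_list (F : fieldType) (HF : infinite_field F) n :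
  exists s : seq F, uniq s /\ size s = n.
Proof.
elim: n => [|n [s [us ss]]]; first by exists [::].
have [x xs] := HF s; exists (x :: s); by rewrite /= xs us ss.
Qed.

Lemma nonroot (F : fieldType) (HF : infinite_field F) (p : {poly F}) :
  p != 0 -> exists x, p.[x] != 0.
Proof.
move=> p0; apply/not_all_not_ex => H.
have [s [us ss]] := uniq_list HF (size p).
have : all (root p) s.
  apply/allP => x _; apply/rootP; case: (eqVneq p.[x] 0) => // hx.
  by case: (H x).
by move/(max_poly_roots p0)/(_ us); rewrite ss ltnn.
Qed.

Lemma mixed_inj (a : nat) (x y u v : nat) :
  (x < a)%N -> (u < a)%N -> (x + a * y = u + a * v)%N -> x = u /\ y = v.
Proof.
move=> xa ua e.
have xu : x = u.
  by move: (congr1 (modn^~ a) e) => /=; rewrite (addnC x) (addnC u) (mulnC a) (mulnC a) !modnMDl !modn_small.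
split=> //; move: e; rewrite xu => /addnI /eqP.
rewrite eqn_mul2l => /orP [/eqP a0|/eqP //]; by move: ua; rewrite a0.
Qed.

Lemma prod3 (F : fieldType) (I J K : finType) (A : I -> F) (B : J -> F) (C : K -> F) :
  (\sum_i A i) * (\sum_j B j) * (\sum_k C k) =
  \sum_(x : I * J * K) A x.1.1 * B x.1.2 * C x.2.
Proof.
rewrite big_distrlr pair_bigA /= big_distrlr pair_bigA /=.
done.
Qed.

Lemma expand (F : fieldType) (I J K : finType) L (u : I -> F) (v : J -> F) (w : K -> F)
  (a : 'I_L -> I -> F) (b : 'I_L -> J -> F) (c : 'I_L -> K -> F) :
  \sum_(l < L) (\sum_i u i * a l i) * (\sum_j v j * b l j) * (\sum_k w k * c l k)
  = \sum_(x : I * J * K) u x.1.1 * v x.1.2 * w x.2 *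
      \sum_(l < L) a l x.1.1 * b l x.1.2 * c l x.2.
Proof.
under eq_bigr do rewrite prod3.
rewrite exchange_big /=; apply: eq_bigr => x _.
rewrite mulr_sumr; apply: eq_bigr => l _.
ring.
Qed.

Theorem proposition3p2 (F : fieldType) (HF : infinite_field F)
  (I J K I' J' K' : finType) (Phi : {set I * J * K})
  (f : I -> I') (g : J -> J') (h : K -> K') :
  (srank F (timage f g h Phi) <= srank F Phi)%N.
Proof.
set L := srank F Phi.
have [T [sT rT]] : exists T : tensor F I J K, supp T = Phi /\ rank T = L.
  by rewrite /L /srank; case: ex_minnP => m /pboolP H _; exact H.
have [a [b [c hT]]] : rank_le T L.
  by rewrite -rT /rank; case: ex_minnP => m /pboolP.
set Psi := timage f g h Phi.
pose nI := #|I|; pose nJ := #|J|.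
pose e (x : I * J * K) :=
  (enum_rank x.1.1 + nI * (enum_rank x.1.2 + nJ * enum_rank x.2))%N.
have e_inj : injective e.
  move=> [[i j] k] [[i2 j2] k2]; rewrite /e /= => E.
  have [E1 E2] := mixed_inj (ltn_ord _) (ltn_ord _) E.
  have [E3 E4] := mixed_inj (ltn_ord _) (ltn_ord _) E2.
  by rewrite (enum_rank_inj (val_inj E1)) (enum_rank_inj (val_inj E3)) (enum_rank_inj (val_inj E4)).
pose P (y : I' * J' * K') : {poly F} := \sum_(x : I * J * K)
  (((f x.1.1, g x.1.2, h x.2) == y)%:R * T x.1.1 x.1.2 x.2) *: 'X^(e x).
have P0 : forall y, y \in Psi -> P y != 0.
  move=> y /imsetP [x0 x0P ->]; apply/eqP => Pz; move: (congr1 (fun p : {poly F} => p`_(e x0)) Pz) => /=.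
  rewrite coef0 coef_sum (bigD1 x0) //= big1 ?addr0.
    rewrite coefZ coefXn !eqxx mulr1 mul1r => /eqP.
    by move: x0P; rewrite -sT inE => /negPf ->.
  move=> x /negPf nx; rewrite coefZ coefXn.
  case: (eqVneq (e x0) (e x)) => [ex|_]; last by rewrite mulr0.
  by move: nx; rewrite (e_inj _ _ ex) eqxx.
have [z Qz] : exists z, (\prod_(y in Psi) P y).[z] != 0.
  by apply: (nonroot HF); apply/prodf_neq0 => y; apply: P0.
rewrite horner_prod in Qz; move/prodf_neq0: Qz => Qz.
pose T' : tensor F I' J' K' := fun i' j' k' =>
  \sum_(l < L) (\sum_i ((f i == i')%:R * z ^+ enum_rank i) * a l i)
    * (\sum_j ((g j == j')%:R * z ^+ (nI * enum_rank j)) * b l j)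
    * (\sum_k ((h k == k')%:R * z ^+ (nI * (nJ * enum_rank k))) * c l k).
have T'E : forall i' j' k', T' i' j' k' = (P (i', j', k')).[z].
  move=> i' j' k'; rewrite /T' expand horner_sum; apply: eq_bigr => x _.
  rewrite hornerZ hornerXn -hT /e !exprD mulnDr.
  rewrite !xpair_eqE.
  case: (f x.1.1 == i'); case: (g x.1.2 == j'); case: (h x.2 == k') => /=;
    rewrite ?exprD; ring.
have sT' : supp T' = Psi.
  apply/setP => [[[i' j'] k']]; rewrite inE /= T'E.
  case: (boolP ((i', j', k') \in Psi)) => yP.
    exact: Qz.
  apply/negbTE; rewrite negbK horner_sum; apply/eqP; apply: big1 => x _.
  rewrite hornerZ; case: eqP => [ex|]; last by rewrite !mul0r.
  case: (eqVneq (T x.1.1 x.1.2 x.2) 0) => [->|nz]; first by rewrite mulr0 mul0r.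
  case/negP: yP; rewrite -ex; apply/imsetP; exists x => //.
  by rewrite -sT inE.
have rT' : rank_le T' L.
  by exists (fun l i' => \sum_i ((f i == i')%:R * z ^+ enum_rank i) * a l i),
    (fun l j' => \sum_j ((g j == j')%:R * z ^+ (nI * enum_rank j)) * b l j),
    (fun l k' => \sum_k ((h k == k')%:R * z ^+ (nI * (nJ * enum_rank k))) * c l k).
rewrite /srank; case: ex_minnP => m _ minm.
apply: leq_trans (minm (rank T') _) _.
  by apply/pboolP; exists T'.
by rewrite /rank; case: ex_minnP => r _ minr; apply: minr; apply/pboolP.
Qed.
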